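(* For all integers $n\ge2$ and $m\ge1$, \[ \mathrm{pw}(K_n\wedge K_m)=n+\max\!\left(0,\ m-\left\lfloor \tfrac n2\right\rfloor\right)-1. \]
   Context: Graphs are finite, simple and undirected. $K_n$ is the complete graph on $n$ vertices. The corona $G_1\wedge G_2$ is the graph obtained from the disjoint union of one copy of $G_1$ and $|V(G_1)|$ copies of $G_2$, one copy $G_2^{(x)}$ for each $x\in V(G_1)$, by joining each vertex $x$ of $G_1$ to all vertices of its copy $G_2^{(x)}$. $\mathrm{pw}$ denotes path-width (minimum over path-decompositions of the maximum bag size minus one). *)

(* Defs.v *)
From mathcomp Require Import all_boot.
Set Implicit Arguments. Unset Strict Implicit. Unset Printing Implicit Defensive.

(* A finite simple graph is given by a symmetric irreflexive relation on a finType. *)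

Definition complete_rel (n : nat) : rel 'I_n := fun x y => x != y.
Arguments complete_rel n : clear implicits.

(* Corona G1 /\ G2: vertex set V1 + (V1 * V2); the pair (x, y) is the copy of y
   in the copy G2^(x).  Edges: edges of G1; edges inside each copy of G2;
   x joined to every vertex of its copy G2^(x). *)
Definition corona_rel (V1 V2 : finType) (e1 : rel V1) (e2 : rel V2) :
  rel (V1 + V1 * V2)%type :=
  fun a b =>
    match a, b with
    | inl x, inl y => e1 x y
    | inl x, inr (x', _) => x == x'
    | inr (x', _), inl x => x == x'
    | inr (x, u), inr (y, v) => (x == y) && e2 u v
    end.

Definition path_decomposition (V : finType) (e : rel V) (s : seq {set V}) : Prop :=
  [/\ forall v : V, exists2 B, B \in s & v \in B,
      forall u v : V, e u v -> exists2 B, B \in s & (u \in B) && (v \in B)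
    & forall (v : V) (i j k : nat), i <= j -> j <= k -> k < size s ->
        v \in nth set0 s i -> v \in nth set0 s k -> v \in nth set0 s j].

Definition pd_width (V : finType) (s : seq {set V}) : nat :=
  (\max_(B <- s) #|B|).-1.

Definition is_pathwidth (V : finType) (e : rel V) (k : nat) : Prop :=
  (exists2 s, path_decomposition e s & pd_width s = k) /\
  (forall s, path_decomposition e s -> k <= pd_width s).

(* Main.v *)
Require Import Defs.
From mathcomp Require Import all_boot zify.
Set Implicit Arguments. Unset Strict Implicit. Unset Printing Implicit Defensive.

Lemma conv2 (V : finType) (e : rel V) s v a b t :
  path_decomposition e s -> v \in nth set0 s a -> v \in nth set0 s b ->
  ((a <= t <= b) || (b <= t <= a)) -> maxn a b < size s -> v \in nth set0 s t.
Proof.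
case=> _ _ Hc Ha Hb /orP[/andP[h1 h2]|/andP[h1 h2]] Hs.
- apply: (Hc v a t b) => //; lia.
- apply: (Hc v b t a) => //; lia.
Qed.

Definition fidx (V : finType) (s : seq {set V}) (v : V) :=
  find (fun B : {set V} => v \in B) s.

Lemma fidx_size (V : finType) (e : rel V) s v :
  path_decomposition e s -> fidx s v < size s.
Proof.
case=> Hv _ _; rewrite /fidx -has_find; apply/hasP.
by have [B HB vB] := Hv v; exists B.
Qed.

Lemma fidx_in (V : finType) (e : rel V) s v :
  path_decomposition e s -> v \in nth set0 s (fidx s v).
Proof.
move=> H; have := fidx_size v H; rewrite /fidx -has_find => h.
exact: (nth_find set0 h).
Qed.

Lemma fidx_le (V : finType) (s : seq {set V}) v j :
  v \in nth set0 s j -> fidx s v <= j.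
Proof.
move=> h; rewrite leqNgt; apply/negP => lt.
by have := before_find set0 lt; rewrite h.
Qed.

Lemma helly (V : finType) (e : rel V) s (K : {set V}) u0 :
  path_decomposition e s -> u0 \in K ->
  (forall u v, u \in K -> v \in K -> u != v -> e u v) ->
  exists2 p, p < size s & K \subset nth set0 s p.
Proof.
move=> Hs Hu0 Hcl.
case: (@arg_maxnP _ u0 (mem K) (fidx s) Hu0) => u Hu Hmax.
exists (fidx s u); first exact: fidx_size Hs.
apply/subsetP => v Hv.
case: (eqVneq v u) => [->|neq]; first exact: fidx_in u Hs.
have : exists2 B, B \in s & (u \in B) && (v \in B).
  by case: Hs => _ He _; apply: He; apply: Hcl => //; rewrite eq_sym.
case=> B HB /andP[uB vB].
have [j Hj defB] := nthP set0 HB.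
rewrite -defB in uB vB.
apply: (conv2 Hs (fidx_in v Hs) vB); last by rewrite gtn_max Hj (fidx_size v Hs).
apply/orP; left; apply/andP; split; [exact: Hmax | exact: fidx_le].
Qed.

Lemma card_sumset (T1 T2 : finType) (A : {set T1 + T2}) :
  #|A| = #|[set x | inl x \in A]| + #|[set y | inr y \in A]|.
Proof.
set A1 := [set x | inl x \in A]; set A2 := [set y | inr y \in A].
have E : A = inl @: A1 :|: inr @: A2.
  apply/setP => -[x|y]; rewrite !inE.
  - apply/idP/idP => [h|/orP[|]].
    + by apply/orP; left; apply/imsetP; exists x; rewrite ?inE.
    + by case/imsetP => z; rewrite inE => hz [->].
    + by case/imsetP.
  - apply/idP/idP => [h|/orP[|]].
    + by apply/orP; right; apply/imsetP; exists y; rewrite ?inE.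
    + by case/imsetP.
    + by case/imsetP => z; rewrite inE => hz [->].
rewrite {1}E cardsU.
have -> : inl @: A1 :&: inr @: A2 = set0.
  apply/setP => v; rewrite !inE; apply/negP => /andP[/imsetP[x _ ->] /imsetP[y _]] //.
rewrite cards0 subn0 !card_imset //.
- by move=> a b [].
- by move=> a b [].
Qed.

Lemma card_ord_range n (A : {set 'I_n}) a b :
  (forall x, x \in A -> a <= x < b) -> #|A| <= b - a.
Proof.
move=> H; rewrite cardE -(size_map val) -(size_iota a (b - a)).
apply: uniq_leq_size; first by rewrite map_inj_uniq ?enum_uniq //; exact: val_inj.
move=> y /mapP[x]; rewrite mem_enum => /H h ->; rewrite mem_iota /=; move: h; case: x => x hx /=; lia.
Qed.

Section Low.
Variables n m : nat.
Notation V := ('I_n + 'I_n * 'I_m)%type.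
Notation E := (corona_rel (complete_rel n) (complete_rel m)).

Definition Cset (i : 'I_n) : {set V} :=
  [set v : V | match v with inl x => x == i | inr (x, _) => x == i end].

Lemma Cset_clique i u v : u \in Cset i -> v \in Cset i -> u != v -> E u v.
Proof.
rewrite !inE; case: u => [x|[x a]]; case: v => [y|[y b]] /= /eqP-> /eqP->.
all: rewrite /= ?eqxx //=.
all: try by rewrite eqxx.
all: rewrite /complete_rel /=.
by apply: contra => /eqP->.
Qed.

Lemma key s (S : {set 'I_n}) (q : 'I_n -> nat) p i1 :
  path_decomposition E s -> p < size s ->
  (forall x : 'I_n, (inl x : V) \in nth set0 s p) ->
  (forall i, q i < size s) -> (forall i, Cset i \subset nth set0 s (q i)) ->
  i1 \in S -> (forall j, j \in S -> (q j <= q i1 <= p) || (p <= q i1 <= q j)) ->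
  exists2 B, B \in s & #|S| + m <= #|B|.
Proof.
move=> Hs Hp Hin Hq HC Hi1 Hbet.
exists (nth set0 s (q i1)); first exact: mem_nth.
rewrite card_sumset leq_add //.
- apply: subset_leq_card; apply/subsetP => j Hj; rewrite inE.
  apply: (conv2 Hs _ (Hin j) (Hbet j Hj)); last by rewrite gtn_max Hp Hq.
  by apply: (subsetP (HC j)); rewrite inE.
- apply: (@leq_trans #|[set (i1, y) | y in 'I_m]|).
    by rewrite card_imset ?card_ord // => a b [].
  apply: subset_leq_card; apply/subsetP => z /imsetP[y _ ->]; rewrite inE.
  by apply: (subsetP (HC i1)); rewrite inE.
Qed.

End Low.

Lemma halfle n k : n <= 2 * k -> n - n./2 <= k.
Proof. rewrite -divn2; lia. Qed.

Lemma halfaux n a b : n <= a + b -> 2 * a < n -> n <= 2 * b.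
Proof. lia. Qed.

Lemma finaux n m a b w : a - 1 <= w -> b - 1 <= w -> n - n %/ 2 + m <= b ->
  n <= a -> n + maxn 0 (m - n %/ 2) - 1 <= w.
Proof. lia. Qed.

Lemma width_ge (V : finType) (s : seq {set V}) (B : {set V}) :
  B \in s -> #|B|.-1 <= pd_width s.
Proof. by move=> h; rewrite /pd_width -!subn1 leq_sub2r // (leq_bigmax_seq (F := fun B : {set V} => #|B|)). Qed.

Lemma lower n m s : 2 <= n ->
  path_decomposition (corona_rel (complete_rel n) (complete_rel m)) s ->
  n + maxn 0 (m - n./2) - 1 <= pd_width s.
Proof.
move=> h2 Hs.
have n0 : 0 < n by lia.
pose X : {set ('I_n + 'I_n * 'I_m)%type} := [set v | if v is inl _ then true else false].
have Xcl : forall u v, u \in X -> v \in X -> u != v ->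
    corona_rel (complete_rel n) (complete_rel m) u v.
  move=> [x|[x a]] [y|[y b]]; rewrite !inE //= /complete_rel.
have X0 : (inl (Ordinal n0) : ('I_n + 'I_n * 'I_m)%type) \in X by rewrite inE.
have [p Hp HX] := helly Hs X0 Xcl.
have Hin : forall x : 'I_n, (inl x : ('I_n + 'I_n * 'I_m)%type) \in nth set0 s p.
  by move=> x; apply: (subsetP HX); rewrite inE.
have Bp : n <= #|nth set0 s p|.
  rewrite card_sumset; apply: leq_trans (leq_addr _ _).
  have -> : [set x | inl x \in nth set0 s p] = setT by apply/setP => x; rewrite !inE Hin.
  by rewrite cardsT card_ord.
have C0 : forall i : 'I_n, (inl i : ('I_n + 'I_n * 'I_m)%type) \in Cset m i by move=> i; rewrite inE.
have [q Hq HC] := fin_all_exists2 (fun i => helly Hs (C0 i) (@Cset_clique n m i)).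
have B2 : exists2 B, B \in s & n - n./2 + m <= #|B|.
  pose S := [set i | q i <= p]; pose T := [set i | p <= q i].
  have ST : n <= #|S| + #|T|.
    have : #|[set: 'I_n]| <= #|S :|: T|.
      apply: subset_leq_card; apply/subsetP => i _; rewrite !inE; apply/orP.
      by case: (leqP (q i) p) => h; [left|right; apply: ltnW].
    rewrite cardsT card_ord cardsU; lia.
  case: (leqP n (2 * #|S|)) => hS.
  - have [i0 Hi0] : exists i0, i0 \in S by apply/card_gt0P; lia.
    case: (@arg_maxnP _ i0 (mem S) q Hi0) => i1 Hi1 Hmax.
    have Hbet : forall j, j \in S -> (q j <= q i1 <= p) || (p <= q i1 <= q j).
      move=> j Hj; apply/orP; left; apply/andP; split; first exact: Hmax.
      by have : i1 \in S := Hi1; rewrite inE.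
    have [B HB HBc] := key Hs Hp Hin Hq HC Hi1 Hbet.
    exists B => //; apply: leq_trans HBc; rewrite leq_add2r; exact: halfle.
  - have [i0 Hi0] : exists i0, i0 \in T by apply/card_gt0P; lia.
    case: (@arg_minnP _ i0 (mem T) q Hi0) => i1 Hi1 Hmin.
    have Hbet : forall j, j \in T -> (q j <= q i1 <= p) || (p <= q i1 <= q j).
      move=> j Hj; apply/orP; right; apply/andP; split; last exact: Hmin.
      by have : i1 \in T := Hi1; rewrite inE.
    have [B HB HBc] := key Hs Hp Hin Hq HC Hi1 Hbet.
    exists B => //; apply: leq_trans HBc; rewrite leq_add2r; apply: halfle; exact: halfaux ST hS.
have W1 := width_ge (mem_nth set0 Hp).
have [B HB HBc] := B2.
have W2 := width_ge HB.
move: W1 W2 HBc Bp; rewrite -!subn1 -divn2; exact: finaux.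
Qed.

Section Up.
Variables n m : nat.
Notation V := ('I_n + 'I_n * 'I_m)%type.
Notation E := (corona_rel (complete_rel n) (complete_rel m)).
Let h := n./2.
Definition lo (x : nat) := minn x h.
Definition hi (x : nat) := if x < h then h else x.+1.
Definition pos (x : nat) := if x < h then x else x.+1.
Definition fb (t : nat) : {set V} :=
  [set v : V | match v with inl x => (lo x <= t <= hi x) | inr (x, _) => t == pos x end].
Definition sdec := mkseq fb n.+1.

Lemma hle : h <= n.
Proof. rewrite /h -divn2; lia. Qed.

Lemma nth_sdec t : t < n.+1 -> nth set0 sdec t = fb t.
Proof. by move=> ht; rewrite /sdec nth_mkseq. Qed.

Lemma fb_in t : t < n.+1 -> fb t \in sdec.
Proof. by move=> ht; rewrite -nth_sdec //; apply: mem_nth; rewrite size_mkseq. Qed.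

Lemma pos_lt (x : 'I_n) : pos x < n.+1.
Proof. case: x => x hx; rewrite /pos /=; case: ifP; lia. Qed.

Lemma lohi_pos x : lo x <= pos x <= hi x.
Proof. rewrite /lo /hi /pos; case: ifP; lia. Qed.

Lemma lohi_h x : lo x <= h <= hi x.
Proof. rewrite /lo /hi; case: ifP; lia. Qed.

Lemma sdec_pd : path_decomposition E sdec.
Proof.
split.
- case=> [x|[x y]].
  + exists (fb h); first by apply: fb_in; have := hle; lia.
    by rewrite inE lohi_h.
  + exists (fb (pos x)); first exact: fb_in (pos_lt x).
    by rewrite inE.
- case=> [x|[x a]]; case=> [y|[y b]] /=.
  + move=> _; exists (fb h); first by apply: fb_in; have := hle; lia.
    by rewrite !inE !lohi_h.
  + move=> /eqP<-; exists (fb (pos x)); first exact: fb_in (pos_lt x).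
    by rewrite !inE lohi_pos eqxx.
  + move=> /eqP exy; exists (fb (pos x)); first exact: fb_in (pos_lt x).
    by rewrite !inE ?exy ?(esym exy) lohi_pos eqxx.
  + move=> /andP[/eqP<- _]; exists (fb (pos x)); first exact: fb_in (pos_lt x).
    by rewrite !inE eqxx.
- move=> v i j k hij hjk hk; rewrite size_mkseq in hk.
  rewrite !nth_sdec //; try lia.
  case: v => [x|[x a]]; rewrite !inE.
  + move=> /andP[h1 _] /andP[_ h2]; apply/andP; split; lia.
  + move=> /eqP h1 /eqP h2; apply/eqP; lia.
Qed.

Lemma inr_card t : #|[set y | (inr y : V) \in fb t]| <= m.
Proof.
rewrite -[X in _ <= X]card_ord; apply: (leq_card_in snd).
move=> [x a] [y b]; rewrite !inE => /eqP hx /eqP hy /= eab; rewrite eab.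
congr pair; apply: val_inj => /=.
move: hx hy; rewrite /pos; case: x => x xn; case: y => y yn /=.
case: ifP; case: ifP; lia.
Qed.

Lemma fb_card t : t < n.+1 -> #|fb t| <= n + (m - h).
Proof.
move=> tn; rewrite card_sumset.
have H2 := hle.
have hh : h + h <= n by rewrite /h -divn2; lia.
have Hr := inr_card t.
case: (ltngtP t h) => ht.
- have Hl : #|[set x | (inl x : V) \in fb t]| <= t.+1 - 0.
    apply: card_ord_range => x; rewrite !inE /lo /hi; case: x => x xn /=.
    case: ifP; lia.
  move: Hl Hr; set a := #|_|; set b := #|_|; lia.
- have Hl : #|[set x | (inl x : V) \in fb t]| <= n - t.-1.
    apply: card_ord_range => x; rewrite !inE /lo /hi; case: x => x xn /=.
    case: ifP; lia.
  move: Hl Hr; set a := #|_|; set b := #|_|; lia.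
- have Hl : #|[set x | (inl x : V) \in fb t]| <= n.
    by rewrite -[X in _ <= X]card_ord max_card.
  have -> : [set y | (inr y : V) \in fb t] = set0.
    apply/setP => -[x a]; rewrite !inE /pos ht; case: x => x xn /=; case: ifP; lia.
  rewrite cards0; move: Hl; set a := #|_|; lia.
Qed.

Lemma sdec_width : pd_width sdec <= n + maxn 0 (m - n./2) - 1.
Proof.
rewrite /pd_width -subn1 leq_sub2r //.
have -> : maxn 0 (m - n./2) = m - h by rewrite max0n.
apply/bigmax_leqP_seq => B /mapP[t]; rewrite mem_iota => /andP[_ ht] -> _.
exact: fb_card.
Qed.

End Up.

Theorem mainTheorem20 (n m : nat) : 2 <= n -> 1 <= m ->
  is_pathwidth (corona_rel (complete_rel n) (complete_rel m))
    (n + maxn 0 (m - n./2) - 1).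
Proof.
move=> hn hm; split.
- exists (sdec n m); first exact: sdec_pd.
  apply/eqP; rewrite eqn_leq sdec_width.
  exact: lower hn (sdec_pd n m).
- move=> s Hs; exact: lower hn Hs.
Qed.
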